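(* For any integers $Q,k\ge2$ there exists $\epsilon_{Q,k}>0$ such that for every $u\in\mathbb{R}^2$, there are at most four distinct elements $d\in\pm D_{Q!,k}$ for which $|u\cdot d-\frac ab|<\epsilon_{Q,k}$ for some non-zero coprime integers $a,b$ with $2\le b\le Q$. Moreover, the set of all such $d\in\pm D_{Q!,k}$ is centrally symmetric.
   Context: For positive integers $q,k$ with $k\ge2$, let $X_{q,k}=\prod_{j=1}^{k-1}(q^{k+j}+q^{k-j}+1)$ and let $D_{q,k}\subseteq\mathbb{Z}^2$ consist of the points $\frac{X_{q,k}}{q^{k+j}+q^{k-j}+1}\left(q^{k+j}-q^{k-j},\,-q^j-2q^k\right)$ for $j=1,\ldots,k-1$; $\pm D_{q,k}=\{\pm d: d\in D_{q,k}\}$. A set $S$ is centrally symmetric if $S=-S$. $u\cdot d$ is the dot product. *)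

(* Defs.v *)
From Stdlib Require Import Reals ZArith Arith List Lia.
Open Scope Z_scope.

Definition fac (q : Z) (k j : nat) : Z :=
  q ^ Z.of_nat (k + j) + q ^ Z.of_nat (k - j) + 1.

Definition Xqk (q : Z) (k : nat) : Z :=
  fold_right Z.mul 1 (map (fac q k) (seq 1 (k - 1))).

(* the j-th point of D_{q,k}:
   X/(q^(k+j)+q^(k-j)+1) * (q^(k+j) - q^(k-j), -q^j - 2 q^k)
   (the division is exact since the factor divides X) *)
Definition Dpt (q : Z) (k j : nat) : Z * Z :=
  let c := Xqk q k / fac q k j in
  (c * (q ^ Z.of_nat (k + j) - q ^ Z.of_nat (k - j)),
   c * (- q ^ Z.of_nat j - 2 * q ^ Z.of_nat k)).

Definition inD (q : Z) (k : nat) (d : Z * Z) : Prop :=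
  exists j : nat, (1 <= j <= k - 1)%nat /\ d = Dpt q k j.

Definition negpt (d : Z * Z) : Z * Z := (- fst d, - snd d).

Definition inPMD (q : Z) (k : nat) (d : Z * Z) : Prop :=
  inD q k d \/ inD q k (negpt d).

Definition dot (u : R * R) (d : Z * Z) : R :=
  (fst u * IZR (fst d) + snd u * IZR (snd d))%R.

Definition near_frac (Q : nat) (eps : R) (u : R * R) (d : Z * Z) : Prop :=
  exists a b : Z, a <> 0 /\ b <> 0 /\ Z.gcd a b = 1 /\
    2 <= b <= Z.of_nat Q /\ (Rabs (dot u d - IZR a / IZR b) < eps)%R.

Definition goodset (Q k : nat) (eps : R) (u : R * R) (d : Z * Z) : Prop :=
  inPMD (Z.of_nat (fact Q)) k d /\ near_frac Q eps u d.

(* Main.v *)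
Require Import Defs.
From Stdlib Require Import Reals ZArith Arith List Lia Lra Psatz Classical.
Import ListNotations.
Open Scope Z_scope.

Definition vv (q : Z) (k j : nat) : Z * Z :=
  (q ^ Z.of_nat (k + j) - q ^ Z.of_nat (k - j), - q ^ Z.of_nat j - 2 * q ^ Z.of_nat k).
Definition zdet (x y : Z * Z) : Z := fst x * snd y - snd x * fst y.

Lemma pw_add q m n : q ^ Z.of_nat (m + n) = q ^ Z.of_nat m * q ^ Z.of_nat n.
Proof. rewrite Nat2Z.inj_add, Z.pow_add_r; lia. Qed.

Lemma pw3 q : q ^ Z.of_nat 3 = q*q*q.
Proof. cbn [Z.of_nat Pos.of_succ_nat Pos.succ]. ring. Qed.
Lemma pw2 q : q ^ Z.of_nat 2 = q*q.
Proof. cbn [Z.of_nat Pos.of_succ_nat Pos.succ]. ring. Qed.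
Lemma pw1 q : q ^ Z.of_nat 1 = q.
Proof. cbn [Z.of_nat Pos.of_succ_nat Pos.succ]. ring. Qed.

Lemma keydets (q : Z) (i p r s : nat) :
  exists W1 W2 W3 E, E = q ^ Z.of_nat i * q ^ Z.of_nat s * q /\
   zdet (vv q (i+p+r+s+3) i) (vv q (i+p+r+s+3) (i+p+r+2)) = E * (-1 + q * W1) /\
   zdet (vv q (i+p+r+s+3) (i+p+1)) (vv q (i+p+r+s+3) (i+p+r+2)) = E * q * W2 /\
   zdet (vv q (i+p+r+s+3) i) (vv q (i+p+r+s+3) (i+p+1)) = E * q * W3.
Proof.
  set (a := q ^ Z.of_nat i). set (P := q ^ Z.of_nat p).
  set (R := q ^ Z.of_nat r). set (S := q ^ Z.of_nat s).
  exists (-2*P*R*S*q^2 + P^2*R^2*q^3 + 2*P^2*R^2*S*q^4 + -2*a^2*P^2*R^2*S*q^4 + 2*a^2*P^3*R^3*S*q^6).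
  exists (-1*P + -2*P*R*S*q^2 + 1*P*R^2*q^2 + 2*P*R^2*S*q^3 + -2*a^2*P^3*R^2*S*q^5 + 2*a^2*P^3*R^3*S*q^6).
  exists (-1*R + -2*P*R^2*S*q^3 + 1*P^2*R*q^2 + 2*P^2*R^2*S*q^4 + -2*a^2*P^2*R^2*S*q^4 + 2*a^2*P^3*R^2*S*q^5).
  exists (a*S*q). split; [reflexivity|].
  unfold vv, zdet; cbn [fst snd].
  replace (i + p + r + s + 3 + i)%nat with (i+i+p+r+s+3)%nat by lia.
  replace (i + p + r + s + 3 - i)%nat with (p+r+s+3)%nat by lia.
  replace (i + p + r + s + 3 + (i+p+r+2))%nat with (i+i+p+p+r+r+s+3+2)%nat by lia.
  replace (i + p + r + s + 3 - (i+p+r+2))%nat with (s+1)%nat by lia.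
  replace (i + p + r + s + 3 + (i+p+1))%nat with (i+i+p+p+r+s+3+1)%nat by lia.
  replace (i + p + r + s + 3 - (i+p+1))%nat with (r+s+2)%nat by lia.
  rewrite !pw_add, ?pw3, ?pw2, ?pw1. fold a P R S.
  split; [|split]; ring.
Qed.
Lemma fold_mul_1modq (q:Z) l : (forall x, In x l -> exists t, x = 1 + q*t) ->
  exists t, fold_right Z.mul 1 l = 1 + q*t.
Proof.
  induction l as [|x l IH]; intros H; cbn [fold_right].
  - exists 0; ring.
  - destruct (H x (or_introl eq_refl)) as [t1 Ht1].
    destruct IH as [t2 Ht2]. { intros y Hy; apply H; right; exact Hy. }
    rewrite Ht1, Ht2. exists (t1 + t2 + q*t1*t2). ring.
Qed.

Lemma fold_mul_div (x:Z) l : In x l -> (x | fold_right Z.mul 1 l).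
Proof.
  induction l as [|y l IH]; cbn [fold_right In]; intros H; [contradiction|].
  destruct H as [<-|H].
  - exists (fold_right Z.mul 1 l); ring.
  - destruct (IH H) as [t Ht]. rewrite Ht. exists (y*t); ring.
Qed.

Lemma pw_succ q n : q ^ Z.of_nat (S n) = q * q ^ Z.of_nat n.
Proof. rewrite Nat2Z.inj_succ, Z.pow_succ_r; lia. Qed.

Lemma fac_1modq q k j : (j < k)%nat -> exists t, fac q k j = 1 + q*t.
Proof.
  intros H. unfold fac.
  replace (k+j)%nat with (S (k+j-1)) by lia.
  replace (k-j)%nat with (S (k-j-1)) by lia.
  rewrite !pw_succ. exists (q ^ Z.of_nat (k+j-1) + q ^ Z.of_nat (k-j-1)); ring.
Qed.

Lemma X_1modq q k : exists t, Xqk q k = 1 + q*t.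
Proof.
  apply fold_mul_1modq. intros x Hx.
  apply in_map_iff in Hx. destruct Hx as [j [<- Hj]].
  apply in_seq in Hj. apply fac_1modq. lia.
Qed.

Lemma fac_pos q k j : 0 <= q -> 0 < fac q k j.
Proof.
  intros Hq. unfold fac.
  pose proof (Z.pow_nonneg q (Z.of_nat (k+j)) Hq).
  pose proof (Z.pow_nonneg q (Z.of_nat (k-j)) Hq). lia.
Qed.

Definition bez (q a : Z) := exists u v, u*q + v*a = 1.

Lemma bez_mul q a b : bez q a -> bez q b -> bez q (a*b).
Proof.
  intros [u1 [v1 H1]] [u2 [v2 H2]].
  exists (u1*u2*q + u1*v2*b + v1*a*u2), (v1*v2).
  transitivity ((u1*q+v1*a)*(u2*q+v2*b)); [ring|]. rewrite H1, H2; ring.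
Qed.

Lemma bez_div q a z : bez q a -> (q | a*z) -> (q | z).
Proof.
  intros [u [v H]] [t Ht].
  exists (u*z + v*t).
  replace z with (z*(u*q+v*a)) at 1 by (rewrite H; ring).
  replace (z*(u*q+v*a)) with (u*q*z + v*(a*z)) by ring.
  rewrite Ht. ring.
Qed.

Lemma c_props q k j : 0 <= q -> (1 <= j <= k-1)%nat ->
  Xqk q k / fac q k j * fac q k j = Xqk q k /\ bez q (Xqk q k / fac q k j).
Proof.
  intros Hq Hj.
  assert (Hd : (fac q k j | Xqk q k)).
  { apply fold_mul_div. apply in_map. apply in_seq. lia. }
  destruct Hd as [t Ht].
  pose proof (fac_pos q k j Hq).
  rewrite Ht, Z.div_mul by lia.
  split; [reflexivity|].
  destruct (X_1modq q k) as [s Hs].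
  exists (-s), (fac q k j). rewrite Ht in Hs. nia.
Qed.

Lemma fact_div n m : (1 <= m <= n)%nat -> Nat.divide m (fact n).
Proof.
  induction n as [|n IH]; intros H; [lia|].
  simpl fact. destruct (Nat.eq_dec m (S n)) as [->|Hne].
  - exists (fact n). lia.
  - destruct (IH ltac:(lia)) as [t Ht]. exists (t + n*t)%nat. rewrite Ht. lia.
Qed.

Definition Bnd (q : Z) (k : nat) : Z :=
  fold_right Z.add 0 (map (fun j => Z.abs (fst (Dpt q k j)) + Z.abs (snd (Dpt q k j))) (seq 1 (k-1))).

Lemma sum_ge (g : nat -> Z) l x : (forall y, 0 <= g y) -> In x l -> g x <= fold_right Z.add 0 (map g l).
Proof.
  intros Hg. induction l as [|y l IH]; cbn [In map fold_right]; intros H; [contradiction|].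
  destruct H as [<-|H].
  - assert (0 <= fold_right Z.add 0 (map g l)).
    { clear IH. induction l as [|z l IH2]; cbn [map fold_right]; [lia|]. specialize (Hg z). lia. }
    lia.
  - specialize (IH H). specialize (Hg y). lia.
Qed.

Lemma Bnd_ge q k j : (1 <= j <= k-1)%nat ->
  Z.abs (fst (Dpt q k j)) <= Bnd q k /\ Z.abs (snd (Dpt q k j)) <= Bnd q k.
Proof.
  intros Hj.
  assert (H := sum_ge (fun j => Z.abs (fst (Dpt q k j)) + Z.abs (snd (Dpt q k j))) (seq 1 (k-1)) j).
  cbv beta in H. unfold Bnd.
  assert (Hin : In j (seq 1 (k-1))) by (apply in_seq; lia).
  specialize (H (fun y => ltac:(lia)) Hin).
  pose proof (Z.abs_nonneg (fst (Dpt q k j))). pose proof (Z.abs_nonneg (snd (Dpt q k j))). lia.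
Qed.

Lemma det_bound x y B : Z.abs (fst x) <= B -> Z.abs (snd x) <= B ->
  Z.abs (fst y) <= B -> Z.abs (snd y) <= B -> Z.abs (zdet x y) <= 2*B*B.
Proof.
  destruct x as [x1 x2], y as [y1 y2]; unfold zdet; cbn [fst snd]; intros.
  pose proof (Z.abs_nonneg x1). pose proof (Z.abs_nonneg y2).
  pose proof (Z.abs_nonneg x2). pose proof (Z.abs_nonneg y1).
  assert (Z.abs (x1*y2) <= B*B) by (rewrite Z.abs_mul; nia).
  assert (Z.abs (x2*y1) <= B*B) by (rewrite Z.abs_mul; nia).
  lia.
Qed.

Definition epsQ (Q k : nat) : R :=
  (/ (IZR (Z.of_nat (fact Q)) * (IZR (6 * Bnd (Z.of_nat (fact Q)) k * Bnd (Z.of_nat (fact Q)) k) + 1)))%R.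

Lemma real_bound (q c1 c2 c3 e1 e2 e3 K eps : R) : (0 <= q)%R ->
  (Rabs c1 <= K)%R -> (Rabs c2 <= K)%R -> (Rabs c3 <= K)%R ->
  (Rabs e1 <= eps)%R -> (Rabs e2 <= eps)%R -> (Rabs e3 <= eps)%R ->
  (Rabs (- q * (c1*e1+c2*e2+c3*e3)) <= q * (3*K*eps))%R.
Proof.
  intros Hq H1 H2 H3 H4 H5 H6.
  rewrite Rabs_mult, Rabs_Ropp, (Rabs_pos_eq q Hq).
  apply Rmult_le_compat_l; [exact Hq|].
  assert (A1 : (Rabs (c1*e1) <= K*eps)%R) by (rewrite Rabs_mult; apply Rmult_le_compat; auto using Rabs_pos).
  assert (A2 : (Rabs (c2*e2) <= K*eps)%R) by (rewrite Rabs_mult; apply Rmult_le_compat; auto using Rabs_pos).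
  assert (A3 : (Rabs (c3*e3) <= K*eps)%R) by (rewrite Rabs_mult; apply Rmult_le_compat; auto using Rabs_pos).
  pose proof (Rabs_triang (c1*e1+c2*e2) (c3*e3)).
  pose proof (Rabs_triang (c1*e1) (c2*e2)).
  lra.
Qed.

Lemma frac_q (q a b B : Z) : b * B = q -> b <> 0 -> (IZR (a*B) = IZR q * (IZR a / IZR b))%R.
Proof.
  intros H Hb. rewrite <- H, !mult_IZR. field. apply not_0_IZR. exact Hb.
Qed.

Lemma eps_small (q K : R) : (0 < q)%R -> (0 <= K)%R -> (q * K * / (q * (K+1)) < 1)%R.
Proof.
  intros Hq HK.
  apply (Rmult_lt_reg_r (q*(K+1))); [nra|].
  rewrite Rmult_assoc, Rinv_l by nra. nra.
Qed.

Lemma Dpt_vv q k m : Dpt q k m =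
  (Xqk q k / fac q k m * fst (vv q k m), Xqk q k / fac q k m * snd (vv q k m)).
Proof. reflexivity. Qed.

Lemma zdet_Dpt q k m n : zdet (Dpt q k m) (Dpt q k n) =
  (Xqk q k / fac q k m) * (Xqk q k / fac q k n) * zdet (vv q k m) (vv q k n).
Proof. rewrite !Dpt_vv. unfold zdet. cbn [fst snd]. ring. Qed.

Lemma b_div_q (Q : nat) (b : Z) : 2 <= b <= Z.of_nat Q -> b * (Z.of_nat (fact Q) / b) = Z.of_nat (fact Q).
Proof.
  intros Hb.
  destruct (fact_div Q (Z.to_nat b) ltac:(lia)) as [t Ht].
  rewrite Ht, Nat2Z.inj_mul, Z2Nat.id by lia.
  rewrite Z.div_mul by lia. ring.
Qed.

Lemma no3_ord (Q k : nat) (u : R * R) (i j l : nat) : (2 <= Q)%nat ->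
  (1 <= i)%nat -> (i < j)%nat -> (j < l)%nat -> (l <= k-1)%nat ->
  near_frac Q (epsQ Q k) u (Dpt (Z.of_nat (fact Q)) k i) ->
  near_frac Q (epsQ Q k) u (Dpt (Z.of_nat (fact Q)) k j) ->
  near_frac Q (epsQ Q k) u (Dpt (Z.of_nat (fact Q)) k l) -> False.
Proof.
  intros HQ Hi Hij Hjl Hlk [ai [bi [Hai [Hbi [Hgi [Hbri Hei]]]]]]
    [aj [bj [Haj [Hbj [Hgj [Hbrj Hej]]]]]] [al [bl [Hal [Hbl [Hgl [Hbrl Hel]]]]]].
  set (q := Z.of_nat (fact Q)) in *.
  assert (Hq : 0 < q) by (unfold q; pose proof (lt_O_fact Q); lia).
  set (B := Bnd q k).
  set (di := Dpt q k i) in *. set (dj := Dpt q k j) in *. set (dl := Dpt q k l) in *.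
  set (Ci := zdet dj dl). set (Cj := - zdet di dl). set (Cl := zdet di dj).
  assert (Hz1 : Ci * fst di + Cj * fst dj + Cl * fst dl = 0) by (unfold Ci, Cj, Cl, zdet; ring).
  assert (Hz2 : Ci * snd di + Cj * snd dj + Cl * snd dl = 0) by (unfold Ci, Cj, Cl, zdet; ring).
  assert (Hreal : (IZR Ci * dot u di + IZR Cj * dot u dj + IZR Cl * dot u dl = 0)%R).
  { unfold dot.
    replace (IZR Ci * (fst u * IZR (fst di) + snd u * IZR (snd di)) +
             IZR Cj * (fst u * IZR (fst dj) + snd u * IZR (snd dj)) +
             IZR Cl * (fst u * IZR (fst dl) + snd u * IZR (snd dl)))%R
      with (fst u * IZR (Ci * fst di + Cj * fst dj + Cl * fst dl) +
            snd u * IZR (Ci * snd di + Cj * snd dj + Cl * snd dl))%R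
      by (rewrite !plus_IZR, !mult_IZR; ring).
    rewrite Hz1, Hz2. ring. }
  destruct (Bnd_ge q k i ltac:(lia)) as [Bi1 Bi2].
  destruct (Bnd_ge q k j ltac:(lia)) as [Bj1 Bj2].
  destruct (Bnd_ge q k l ltac:(lia)) as [Bl1 Bl2].
  fold di B in Bi1, Bi2. fold dj B in Bj1, Bj2. fold dl B in Bl1, Bl2.
  assert (HCi : Z.abs Ci <= 2*B*B) by (apply det_bound; auto).
  assert (HCj : Z.abs Cj <= 2*B*B) by (unfold Cj; rewrite Z.abs_opp; apply det_bound; auto).
  assert (HCl : Z.abs Cl <= 2*B*B) by (apply det_bound; auto).
  assert (HB0 : 0 <= B) by (pose proof (Z.abs_nonneg (fst di)); lia).
  pose proof (b_div_q Q bi Hbri) as Hqi. pose proof (b_div_q Q bj Hbrj) as Hqj.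
  pose proof (b_div_q Q bl Hbrl) as Hql. fold q in Hqi, Hqj, Hql.
  set (Bi := q / bi) in *. set (Bj := q / bj) in *. set (Bl := q / bl) in *.
  set (N := Ci * (ai * Bi) + Cj * (aj * Bj) + Cl * (al * Bl)).
  assert (HN : N = 0).
  { set (ei := (dot u di - IZR ai / IZR bi)%R) in *.
    set (ej := (dot u dj - IZR aj / IZR bj)%R) in *.
    set (el := (dot u dl - IZR al / IZR bl)%R) in *.
    assert (HNe : IZR N = (- IZR q * (IZR Ci * ei + IZR Cj * ej + IZR Cl * el))%R).
    { unfold N. rewrite !plus_IZR, (mult_IZR Ci), (mult_IZR Cj), (mult_IZR Cl).
      rewrite (frac_q q ai bi Bi Hqi ltac:(lia)), (frac_q q aj bj Bj Hqj ltac:(lia)),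
        (frac_q q al bl Bl Hql ltac:(lia)).
      assert (D : (IZR Ci * (IZR q * (IZR ai / IZR bi)) + IZR Cj * (IZR q * (IZR aj / IZR bj)) +
         IZR Cl * (IZR q * (IZR al / IZR bl)) -
         - IZR q * (IZR Ci * ei + IZR Cj * ej + IZR Cl * el) =
         IZR q * (IZR Ci * dot u di + IZR Cj * dot u dj + IZR Cl * dot u dl))%R)
        by (unfold ei, ej, el; ring).
      rewrite Hreal, Rmult_0_r in D. lra. }
    assert (Hbd : (Rabs (IZR N) <= IZR q * (3 * IZR (2*B*B) * epsQ Q k))%R).
    { rewrite HNe. apply real_bound.
      - apply IZR_le; lia.
      - rewrite <- abs_IZR; apply IZR_le; lia.
      - rewrite <- abs_IZR; apply IZR_le; lia.
      - rewrite <- abs_IZR; apply IZR_le; lia.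
      - lra. - lra. - lra. }
    assert (Hs : (IZR q * (3 * IZR (2*B*B) * epsQ Q k) < 1)%R).
    { replace (IZR q * (3 * IZR (2*B*B) * epsQ Q k))%R
        with (IZR q * IZR (6*B*B) * / (IZR q * (IZR (6*B*B) + 1)))%R.
      - apply eps_small; [apply IZR_lt; lia | apply IZR_le; apply Z.mul_nonneg_nonneg; [apply Z.mul_nonneg_nonneg|]; lia].
      - unfold epsQ. fold q B. rewrite !mult_IZR. ring. }
    assert (Habs : (Rabs (IZR N) < 1)%R) by (eapply Rle_lt_trans; [exact Hbd | exact Hs]).
    rewrite <- abs_IZR in Habs. apply lt_IZR in Habs.
    assert (Hz : forall z, Z.abs z < 1 -> z = 0) by (intros z Hz; lia).
    exact (Hz N Habs). }
  assert (HCi' : Ci = (Xqk q k / fac q k j) * (Xqk q k / fac q k l) * zdet (vv q k j) (vv q k l))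
    by (unfold Ci; apply zdet_Dpt).
  assert (HCj' : Cj = - ((Xqk q k / fac q k i) * (Xqk q k / fac q k l) * zdet (vv q k i) (vv q k l)))
    by (unfold Cj; f_equal; apply zdet_Dpt).
  assert (HCl' : Cl = (Xqk q k / fac q k i) * (Xqk q k / fac q k j) * zdet (vv q k i) (vv q k j))
    by (unfold Cl; apply zdet_Dpt).
  assert (Hq0 : 0 <= q) by (apply Z.lt_le_incl; exact Hq).
  destruct (c_props q k i Hq0 ltac:(lia)) as [_ Hbzi].
  destruct (c_props q k l Hq0 ltac:(lia)) as [_ Hbzl].
  unfold N in HN. clearbody Ci Cj Cl Bi Bj Bl.
  clear Hreal Hz1 Hz2 HCi HCj HCl Bi1 Bi2 Bj1 Bj2 Bl1 Bl2 HB0 Hei Hej Hel N B di dj dl.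
  revert Hbzi Hbzl HCi' HCj' HCl'.
  generalize (Xqk q k / fac q k i) (Xqk q k / fac q k j) (Xqk q k / fac q k l).
  intros ci cj cl Hbzi Hbzl HCi' HCj' HCl'.
  destruct (ltac:(exists (j-i-1)%nat, (l-j-1)%nat, (k-l-1)%nat; lia) :
    exists p r s, j = (i+p+1)%nat /\ l = (i+p+r+2)%nat /\ k = (i+p+r+s+3)%nat)
    as [p [r [s [-> [-> ->]]]]].
  destruct (keydets q i p r s) as [W1 [W2 [W3 [E [HE [D1 [D2 D3]]]]]]].
  rewrite D2 in HCi'. rewrite D1 in HCj'. rewrite D3 in HCl'.
  assert (HEpos : 0 < E).
  { rewrite HE. pose proof (Z.pow_pos_nonneg q (Z.of_nat i) Hq ltac:(lia)).
    pose proof (Z.pow_pos_nonneg q (Z.of_nat s) Hq ltac:(lia)).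
    apply Z.mul_pos_pos; [apply Z.mul_pos_pos|]; assumption. }
  assert (Heq : E * (q * (cj * cl * W2 * (ai * Bi) + ci * cj * W3 * (al * Bl))
                   - ci * cl * (-1 + q * W1) * (aj * Bj)) = 0).
  { rewrite <- HN. rewrite HCi', HCj', HCl'. ring. }
  apply Z.mul_eq_0 in Heq. destruct Heq as [Heq|Heq]; [rewrite Heq in HEpos; exact (Z.lt_irrefl _ HEpos)|].
  assert (Hdv : (q | (ci * cl * (-1 + q * W1)) * (aj * Bj))).
  { exists (cj * cl * W2 * (ai * Bi) + ci * cj * W3 * (al * Bl)).
    rewrite <- (Zminus_eq _ _ Heq). ring. }
  apply bez_div in Hdv.
  2: { apply bez_mul; [apply bez_mul; assumption|]. exists W1, (-1). ring. }
  rewrite <- Hqj in Hdv.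
  apply Z.mul_divide_cancel_r in Hdv; [|intro H0; rewrite H0, Z.mul_0_r in Hqj; rewrite <- Hqj in Hq; exact (Z.lt_irrefl _ Hq)].
  assert (Hg : (bj | Z.gcd aj bj)) by (apply Z.gcd_greatest; [exact Hdv | apply Z.divide_refl]).
  rewrite Hgj in Hg. apply Z.divide_1_r in Hg. clear - Hg Hbrj. lia.
Qed.

Lemma negpt_inv d : negpt (negpt d) = d.
Proof. destruct d as [x y]; unfold negpt; cbn [fst snd]; rewrite !Z.opp_involutive; reflexivity. Qed.

Lemma near_neg Q eps u d : near_frac Q eps u d -> near_frac Q eps u (negpt d).
Proof.
  intros [a [b [Ha [Hb [Hg [Hbr He]]]]]].
  exists (-a), b. split; [lia|]. split; [exact Hb|]. split; [rewrite Z.gcd_opp_l; exact Hg|].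
  split; [exact Hbr|].
  replace (dot u (negpt d) - IZR (-a) / IZR b)%R with (- (dot u d - IZR a / IZR b))%R.
  - rewrite Rabs_Ropp. exact He.
  - unfold dot, negpt. cbn [fst snd]. rewrite !opp_IZR. unfold Rdiv. ring.
Qed.

Lemma no3 (Q k : nat) (u : R * R) (a b c : nat) : (2 <= Q)%nat ->
  let G := fun m => (1 <= m <= k-1)%nat /\ near_frac Q (epsQ Q k) u (Dpt (Z.of_nat (fact Q)) k m) in
  G a -> G b -> G c -> a <> b -> a <> c -> b <> c -> False.
Proof.
  intros HQ G [Ha Na] [Hb Nb] [Hc Nc] Hab Hac Hbc.
  destruct (Nat.lt_total a b) as [Hab'|[Hab'|Hab']]; [|contradiction|];
  destruct (Nat.lt_total b c) as [Hbc'|[Hbc'|Hbc']]; try contradiction;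
  destruct (Nat.lt_total a c) as [Hac'|[Hac'|Hac']]; try contradiction.
  - exact (no3_ord Q k u a b c HQ ltac:(lia) Hab' Hbc' ltac:(lia) Na Nb Nc).
  - lia.
  - exact (no3_ord Q k u a c b HQ ltac:(lia) Hac' ltac:(lia) ltac:(lia) Na Nc Nb).
  - exact (no3_ord Q k u c a b HQ ltac:(lia) ltac:(lia) Hab' ltac:(lia) Nc Na Nb).
  - exact (no3_ord Q k u b a c HQ ltac:(lia) ltac:(lia) Hac' ltac:(lia) Nb Na Nc).
  - exact (no3_ord Q k u b c a HQ ltac:(lia) ltac:(lia) ltac:(lia) ltac:(lia) Nb Nc Na).
  - lia.
  - exact (no3_ord Q k u c b a HQ ltac:(lia) ltac:(lia) ltac:(lia) ltac:(lia) Nc Nb Na).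
Qed.

Theorem lemma6 (Q k : nat) (HQ : (2 <= Q)%nat) (Hk : (2 <= k)%nat) :
  exists eps : R, (0 < eps)%R /\
    forall u : R * R,
      (forall l : list (Z * Z),
          NoDup l -> (forall d, In d l -> goodset Q k eps u d) -> (length l <= 4)%nat) /\
      (forall d : Z * Z, goodset Q k eps u d -> goodset Q k eps u (negpt d)).
Proof.
  exists (epsQ Q k). split.
  { unfold epsQ. apply Rinv_0_lt_compat.
    set (q := Z.of_nat (fact Q)). set (B := Bnd q k).
    assert (Hq : (0 < IZR q)%R) by (apply IZR_lt; unfold q; pose proof (lt_O_fact Q); lia).
    assert (HB : (0 <= IZR (6 * B * B))%R).
    { apply IZR_le. rewrite <- Z.mul_assoc. apply Z.mul_nonneg_nonneg; [lia|]. apply Z.square_nonneg. }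
    apply Rmult_lt_0_compat; lra. }
  intros u. split.
  - intros l Hnd Hl.
    set (q := Z.of_nat (fact Q)).
    set (G := fun m => (1 <= m <= k-1)%nat /\ near_frac Q (epsQ Q k) u (Dpt q k m)).
    assert (Hel : forall d, In d l -> exists m, G m /\ (d = Dpt q k m \/ d = negpt (Dpt q k m))).
    { intros d Hd. destruct (Hl d Hd) as [[[m [Hm Hdm]]|[m [Hm Hdm]]] Hn]; fold q in Hdm.
      - exists m. split; [split; [exact Hm| rewrite <- Hdm; exact Hn]|left; exact Hdm].
      - exists m. split.
        + split; [exact Hm|]. rewrite <- Hdm. apply near_neg. exact Hn.
        + right. rewrite <- Hdm, negpt_inv. reflexivity. }
    pose proof (no3 Q k u) as N3. cbv zeta in N3. fold q in N3.
    destruct (classic (exists a, G a)) as [[a Ga]|Hno].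
    + destruct (classic (exists b, G b /\ b <> a)) as [[b [Gb Hba]]|Hno2].
      * transitivity (length [Dpt q k a; negpt (Dpt q k a); Dpt q k b; negpt (Dpt q k b)]);
          [|simpl; lia].
        apply NoDup_incl_length; [exact Hnd|]. intros d Hd.
        destruct (Hel d Hd) as [m [Gm Hdm]].
        destruct (Nat.eq_dec m a) as [->|Hma].
        { destruct Hdm as [->| ->]; simpl; tauto. }
        destruct (Nat.eq_dec m b) as [->|Hmb].
        { destruct Hdm as [->| ->]; simpl; tauto. }
        exfalso. exact (N3 a b m HQ Ga Gb Gm (fun e => Hba (eq_sym e)) (fun e => Hma (eq_sym e)) (fun e => Hmb (eq_sym e))).
      * transitivity (length [Dpt q k a; negpt (Dpt q k a)]); [|simpl; lia].
        apply NoDup_incl_length; [exact Hnd|]. intros d Hd.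
        destruct (Hel d Hd) as [m [Gm Hdm]].
        destruct (Nat.eq_dec m a) as [->|Hma].
        { destruct Hdm as [->| ->]; simpl; tauto. }
        exfalso. apply Hno2. exists m. split; assumption.
    + destruct l as [|d l']; [simpl; lia|].
      exfalso. destruct (Hel d (or_introl eq_refl)) as [m [Gm _]]. apply Hno. exists m; exact Gm.
  - intros d [Hin Hn]. split.
    + destruct Hin as [H|H]; [right; rewrite negpt_inv; exact H | left; exact H].
    + apply near_neg. exact Hn.
Qed.
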